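(* Let $\varphi$ be an endomorphism of a torsion-free abelian group $A$. (R) $\varphi$ is inertial if and only if $\varphi$ is multiplication by $\frac mn$ for coprime integers $m,n$ such that, if $n\ne\pm1$, then $r_0(A)<\infty$. (L) $\varphi$ is left-inertial if and only if $\varphi$ is multiplication by $\frac mn$ for coprime integers $m,n$ with $m\neq0$ such that, if $m\ne\pm1$, then $r_0(A)<\infty$.
   Context: Abelian groups are written additively. An endomorphism $\varphi$ of $A$ is inertial if $(\varphi(X)+X)/X$ is finite for every subgroup $X\le A$, and left-inertial if $X/(X\cap\varphi(X))$ is finite for every $X\le A$. For a torsion-free group, $\varphi$ is multiplication by $\frac mn$ ($n\neq0$) means $n\varphi(x)=mx$ for all $x\in A$ (equivalently $\varphi(nx)=mx$). $r_0(A)$ denotes the torsion-free rank of $A$. *)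

(* Defs.v *)
From HB Require Import structures.
From mathcomp Require Import all_boot all_order all_algebra.
Set Implicit Arguments. Unset Strict Implicit. Unset Printing Implicit Defensive.
Import Order.TTheory GRing.Theory Num.Theory.
Local Open Scope ring_scope.

Definition torsion_free (A : zmodType) : Prop :=
  forall (k : nat) (x : A), (0 < k)%N -> x *+ k = 0 -> x = 0.

Definition is_subgroup (A : zmodType) (X : A -> Prop) : Prop :=
  X 0 /\ forall x y, X x -> X y -> X (x - y).

(* For subgroups X <= Y of A, the quotient Y/X is finite: finitely many
   cosets of X meet Y. *)
Definition finite_quotient (A : zmodType) (Y X : A -> Prop) : Prop :=
  exists s : seq A, forall z, Y z -> exists2 y, y \in s & X (z - y).

Definition img_plus (A : zmodType) (phi : A -> A) (X : A -> Prop) : A -> Prop :=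
  fun z => exists x x', [/\ X x, X x' & z = phi x + x'].

Definition cap_img (A : zmodType) (phi : A -> A) (X : A -> Prop) : A -> Prop :=
  fun z => X z /\ exists x, X x /\ z = phi x.

Definition inertial (A : zmodType) (phi : A -> A) : Prop :=
  forall X : A -> Prop, is_subgroup X -> finite_quotient (img_plus phi X) X.

Definition left_inertial (A : zmodType) (phi : A -> A) : Prop :=
  forall X : A -> Prop, is_subgroup X -> finite_quotient X (cap_img phi X).

Definition mult_by (A : zmodType) (phi : A -> A) (m n : int) : Prop :=
  n != 0 /\ forall x, phi x *~ n = x *~ m.

Definition Zindep (A : zmodType) (s : seq A) : Prop :=
  forall c : seq int, size c = size s ->
    \sum_(i < size s) s`_i *~ c`_i = 0 -> forall i, c`_i = 0.

Definition finite_rank (A : zmodType) : Prop :=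
  exists N : nat, forall s : seq A, Zindep s -> (size s <= N)%N.

(* Main.v *)
From Stdlib Require Import ClassicalEpsilon Classical.
Require Import Defs.
From HB Require Import structures.
From mathcomp Require Import all_boot all_order all_algebra.
From mathcomp Require Import ring.
Import Order.TTheory GRing.Theory Num.Theory.
Local Open Scope ring_scope.
Set Implicit Arguments. Unset Strict Implicit. Unset Printing Implicit Defensive.

Lemma tfz (A : zmodType) (htf : torsion_free A) (x : A) (c : int) :
  c != 0 -> x *~ c = 0 -> x = 0.
Proof.
case: c => k hk.
  rewrite -pmulrn; apply: htf; rewrite lt0n; exact: hk.
rewrite NegzE mulrNz -pmulrn => /eqP; rewrite oppr_eq0 => /eqP; exact: htf.
Qed.

Arguments tfz {A} htf {x c}.

Lemma tfz_inj (A : zmodType) (htf : torsion_free A) (x y : A) (c : int) :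
  c != 0 -> x *~ c = y *~ c -> x = y.
Proof.
move=> hc h; apply/eqP; rewrite -subr_eq0; apply/eqP; apply: (tfz htf hc).
by rewrite mulrzBl h subrr.
Qed.

Lemma tfz_injr (A : zmodType) (htf : torsion_free A) (x : A) (a b : int) :
  x != 0 -> x *~ a = x *~ b -> a = b.
Proof.
move=> hx h; apply/eqP; rewrite -subr_eq0; apply/negPn/negP => hab.
by move/eqP: hx; apply; apply: (tfz htf hab); rewrite mulrzBr h subrr.
Qed.

Lemma pigeon (T : eqType) (s : seq T) (P : nat -> T -> Prop) :
 (forall i, (i <= size s)%N -> exists y, y \in s /\ P i y) ->
 exists i j y, [/\ (i < j)%N, (j <= size s)%N, P i y & P j y].
Proof.
move=> H.
have H' : forall i : 'I_(size s).+1, exists y, y \in s /\ P i y.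
  by move=> i; apply: H; rewrite -ltnS.
pose f i := proj1_sig (constructive_indefinite_description _ (H' i)).
have fP i : f i \in s /\ P i (f i) := proj2_sig (constructive_indefinite_description _ (H' i)).
have gP i : (index (f i) s < size s)%N by rewrite index_mem; case: (fP i).
pose g i : 'I_(size s) := Ordinal (gP i).
have /injectivePn [i [j ij gij]] : ~~ injectiveb g.
  apply/injectiveP => ginj; have := leq_card g ginj.
  by rewrite !card_ord ltnn.
have fij : f i = f j.
  have e : index (f i) s = index (f j) s by have := congr1 val gij.
  by rewrite -(nth_index (f i) (proj1 (fP i))) e nth_index //; case: (fP j).
case: (ltngtP i j) => h.
- exists i, j, (f i); split => //; first by rewrite -ltnS.
  by case: (fP i). by rewrite fij; case: (fP j).
- exists j, i, (f i); split => //; first by rewrite -ltnS.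
  by rewrite fij; case: (fP j). by case: (fP i).
- by move: ij; rewrite (val_inj h) eqxx.
Qed.

Lemma sg_opp (A : zmodType) (X : A -> Prop) : is_subgroup X -> forall x, X x -> X (- x).
Proof. by case=> h0 hB x hx; rewrite -sub0r; apply: hB. Qed.

Lemma sg_add (A : zmodType) (X : A -> Prop) : is_subgroup X -> forall x y, X x -> X y -> X (x + y).
Proof. move=> hX x y hx hy; rewrite -[y]opprK; apply: hX.2 => //; exact: sg_opp. Qed.

Lemma sg_mulz (A : zmodType) (X : A -> Prop) : is_subgroup X -> forall x c, X x -> X (x *~ c).
Proof.
move=> hX x c hx.
have hn : forall n : nat, X (x *+ n).
  elim=> [|n ih]; first by rewrite mulr0n; exact: hX.1.
  by rewrite mulrS; apply: sg_add.
case: c => n; first by rewrite -pmulrn.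
by rewrite NegzE mulrNz -pmulrn; apply: sg_opp.
Qed.

Lemma cap_sg (A : zmodType) (phi : {additive A -> A}) (X : A -> Prop) :
  is_subgroup X -> is_subgroup (cap_img phi X).
Proof.
move=> hX; split.
  split; first exact: hX.1. by exists 0; split; [exact: hX.1 | rewrite raddf0].
move=> x y [hx [u [hu ex]]] [hy [v [hv ey]]]; split; first exact: (hX.2 _ _ hx hy).
by rewrite ex ey; exists (u - v); split; [exact: hX.2 | rewrite raddfB].
Qed.

Definition cyc (A : zmodType) (x : A) : A -> Prop := fun z => exists c : int, z = x *~ c.

Lemma cyc_sg (A : zmodType) (x : A) : is_subgroup (cyc x).
Proof.
split; first by exists 0; rewrite mulr0z.
by move=> _ _ [a ->] [b ->]; exists (a - b); rewrite mulrzBr.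
Qed.

Definition spanf (A : zmodType) (f : nat -> A) : A -> Prop :=
  fun z => exists K (c : nat -> int), z = \sum_(i < K) f i *~ c i.

Lemma spanf_ext (A : zmodType) (f : nat -> A) (K K' : nat) (c : nat -> int) : (K <= K')%N ->
  \sum_(i < K) f i *~ c i = \sum_(i < K') f i *~ (if (i < K)%N then c i else 0).
Proof.
move=> hK; rewrite -(subnKC hK) big_split_ord /=.
rewrite [X in _ + X]big1 ?addr0; last by move=> i _; rewrite ltnNge leq_addr /= mulr0z.
by apply: eq_bigr => i _; rewrite ltn_ord.
Qed.

Lemma spanf_sg (A : zmodType) (f : nat -> A) : is_subgroup (spanf f).
Proof.
split; first by exists 0%N, (fun _ => 0); rewrite big_ord0.
move=> _ _ [K [c ->]] [K' [c' ->]].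
exists (maxn K K'), (fun i => (if (i < K)%N then c i else 0) - (if (i < K')%N then c' i else 0)).
rewrite (@spanf_ext _ f K (maxn K K') c (leq_maxl K K')) (@spanf_ext _ f K' (maxn K K') c' (leq_maxr K K')) -sumrB.
by apply: eq_bigr => i _; rewrite mulrzBr.
Qed.

Lemma rat_inertial (A : zmodType) (phi : {additive A -> A}) :
  inertial phi -> forall x, exists j k : int, k != 0 /\ phi x *~ k = x *~ j.
Proof.
move=> hI x; have [s hs] := hI (cyc x) (cyc_sg x).
have [i [j [y [hij _ [a ea] [b eb]]]]] :=
  @pigeon _ s (fun i y => cyc x (phi x *~ i%:Z - y)) (fun i _ =>
   let: ex_intro2 y hy hz := hs (phi x *~ i%:Z) (ex_intro _ (x *~ i%:Z) (ex_intro _ 0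
      (And3 (ex_intro _ i%:Z erefl) (ex_intro _ 0 (esym (mulr0z x))) (esym (etrans (addr0 _) (raddfMz phi i%:Z x))))))
   in ex_intro _ y (conj hy hz)).
exists (b - a), (j%:Z - i%:Z); split.
  by rewrite subr_eq0 eqz_nat gtn_eqF.
by rewrite !mulrzBr -ea -eb opprB addrA subrK.
Qed.

Lemma rat_left (A : zmodType) (htf : torsion_free A) (phi : {additive A -> A}) :
  left_inertial phi -> forall x, exists j k : int, [/\ j != 0, k != 0 & phi x *~ k = x *~ j].
Proof.
move=> hL x; have [->|hx] := eqVneq x 0.
  by exists 1, 1; rewrite raddf0 !mul0rz.
have [s hs] := hL (cyc x) (cyc_sg x).
have [i [j [y [hij _ hi hj]]]] :=
  @pigeon _ s (fun i y => cap_img phi (cyc x) (x *~ i%:Z - y)) (fun i _ =>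
   let: ex_intro2 y hy hz := hs (x *~ i%:Z) (ex_intro _ i%:Z erefl)
   in ex_intro _ y (conj hy hz)).
have := (cap_sg phi (cyc_sg x)).2 _ _ hj hi.
rewrite opprB addrA subrK -mulrzBr => -[_ [w [[c ->] e]]].
have hji : j%:Z - i%:Z != 0 by rewrite subr_eq0 eqz_nat gtn_eqF.
exists (j%:Z - i%:Z), c; split => //.
  apply/eqP => c0; move: e; rewrite c0 mulr0z raddf0 => /(tfz htf hji) x0.
  by move/eqP: hx.
by rewrite e raddfMz.
Qed.

Lemma globalize (A : zmodType) (htf : torsion_free A) (phi : {additive A -> A})
  (Hrat : forall y, exists j k : int, k != 0 /\ phi y *~ k = y *~ j)
  (x0 : A) (m n : int) : x0 != 0 -> phi x0 *~ n = x0 *~ m ->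
  forall y, phi y *~ n = y *~ m.
Proof.
move=> hx0 h0 y.
have [->|hy0] := eqVneq y 0; first by rewrite raddf0 !mul0rz.
have [j [k [hk hy]]] := Hrat y.
have [j' [k' [hk' hxy]]] := Hrat (x0 + y).
suff jm : j * n = m * k.
  apply: (tfz_inj htf hk); rewrite -!mulrzA (mulrC n k) (mulrzA (phi y) k n) hy -mulrzA.
  by rewrite jm.
pose u := phi y *~ n - y *~ m.
have E1 : u *~ k = y *~ (j * n - m * k).
  rewrite /u mulrzBl -!mulrzA (mulrC n k) (mulrzA (phi y) k n) hy -mulrzA.
  by rewrite mulrzBr.
have E2 : u *~ k' = (x0 + y) *~ (j' * n - m * k').
  have -> : u = phi (x0 + y) *~ n - (x0 + y) *~ m.
    by rewrite /u raddfD !mulrzDl h0 opprD addrACA subrr add0r.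
  rewrite mulrzBl -!mulrzA (mulrC n k') (mulrzA (phi (x0 + y)) k' n) hxy -mulrzA.
  by rewrite mulrzBr.
pose a := (j * n - m * k) * k'.
pose b := (j' * n - m * k') * k.
have E3 : y *~ a = (x0 + y) *~ b.
  by rewrite /a /b !mulrzA -E1 -E2 -!mulrzA mulrC.
have hj : j * n - m * k = 0 -> j * n = m * k by move/eqP; rewrite subr_eq0 => /eqP.
have [b0|bn0] := eqVneq b 0.
  move: E3; rewrite b0 mulr0z -(mulr0z y) => /(tfz_injr htf hy0).
  move=> /eqP; rewrite /a mulf_eq0 (negbTE hk') orbF => /eqP; exact: hj.
have E4 : x0 *~ b = y *~ (a - b) by rewrite mulrzBr E3 mulrzDl addrK.
have E5 : y *~ ((a - b) * (m * k)) = y *~ (j * ((a - b) * n)).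
  have F1 : phi x0 *~ b = phi y *~ (a - b) by rewrite -!raddfMz E4.
  rewrite mulrzA -E4 -mulrzA.
  have -> : b * (m * k) = m * (b * k) by ring.
  rewrite mulrzA -h0 -mulrzA.
  have -> : n * (b * k) = b * (n * k) by ring.
  rewrite mulrzA F1 -mulrzA.
  have -> : (a - b) * (n * k) = k * ((a - b) * n) by ring.
  by rewrite mulrzA hy -mulrzA.
move/(tfz_injr htf hy0)/eqP: E5; rewrite -subr_eq0.
have -> : (a - b) * (m * k) - j * ((a - b) * n) = - ((a - b) * (j * n - m * k)) by ring.
rewrite oppr_eq0 mulf_eq0 => /orP [ab0 | /eqP]; last exact: hj.
move: E4; rewrite (eqP ab0) mulr0z => /(tfz htf bn0) x00.
by move/eqP: hx0.
Qed.

Lemma normalize (A : zmodType) (htf : torsion_free A) (phi : {additive A -> A})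
  (x0 : A) (j k : int) : k != 0 -> phi x0 *~ k = x0 *~ j ->
  exists m n : int, [/\ n != 0, coprimez m n, phi x0 *~ n = x0 *~ m & (j != 0 -> m != 0)].
Proof.
move=> hk h; pose q : rat := j%:~R / k%:~R.
have e : numq q * k = j * denq q.
  apply/eqP; rewrite -(eqr_int rat) !intrM numqE /q; apply/eqP.
  by field; rewrite intr_eq0.
exists (numq q), (denq q); split.
- exact: denq_neq0.
- exact: coprime_num_den.
- apply: (tfz_inj htf hk); rewrite -!mulrzA (mulrC (denq q) k) (mulrzA (phi x0) k) h -mulrzA.
  by rewrite e.
- move=> hj; rewrite numq_eq0 /q mulf_eq0 invr_eq0 !intr_eq0 negb_or hj; exact: hk.
Qed.

Lemma uniq_rep (A : zmodType) (f : nat -> A) (K : nat) :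
  Zindep (mkseq f K) -> forall a b : nat -> int,
  \sum_(i < K) f i *~ a i = \sum_(i < K) f i *~ b i -> forall i, (i < K)%N -> a i = b i.
Proof.
move=> hI a b e i hi.
have := hI (mkseq (fun l => a l - b l) K); rewrite !size_mkseq => /(_ erefl).
have -> : \sum_(l < K) (mkseq f K)`_l *~ (mkseq (fun l => a l - b l) K)`_l = 0.
  rewrite (eq_bigr (fun l : 'I_K => f l *~ a l - f l *~ b l)); first by rewrite sumrB e subrr.
  by move=> l _; rewrite !nth_mkseq // mulrzBr.
by move=> /(_ erefl i); rewrite nth_mkseq // => /eqP; rewrite subr_eq0 => /eqP.
Qed.

Lemma delta_sum (A : zmodType) (f : nat -> A) (K j : nat) (m : int) : (j < K)%N ->
  \sum_(l < K) f l *~ (if l == j :> nat then m else 0) = f j *~ m.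
Proof.
move=> hj; rewrite (bigD1 (Ordinal hj)) //= eqxx big1 ?addr0 // => l hl.
rewrite ifF ?mulr0z //; apply/negbTE; apply: contra hl => /eqP e.
by apply/eqP/val_inj.
Qed.

Lemma spanf_f (A : zmodType) (f : nat -> A) (i : nat) : spanf f (f i).
Proof.
exists i.+1, (fun l => if l == i then 1 else 0).
by rewrite delta_sum // mulr1z.
Qed.

Lemma exchange (A : zmodType) (htf : torsion_free A) (t : seq A) : Zindep t ->
  (forall N, exists s : seq A, Zindep s /\ (N < size s)%N) -> exists a, Zindep (rcons t a).
Proof.
move=> ht hu; apply: NNPP => hno.
have hdep : forall a, exists de : int * (nat -> int),
    de.1 != 0 /\ a *~ de.1 = \sum_(i < size t) t`_i *~ de.2 i.
  move=> a; have : ~ Zindep (rcons t a) by move=> h; apply: hno; exists a.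
  rewrite /Zindep => hn; have [c hc0] := not_all_ex_not _ _ hn.
  have [hc hc1] := imply_to_and _ _ hc0; have [hs hs1] := imply_to_and _ _ hc1.
  have [i hi] := not_all_ex_not _ _ hs1; move: hc hs.
  rewrite size_rcons => hc; rewrite big_ord_recr /=.
  rewrite nth_rcons ltnn eqxx.
  rewrite (eq_bigr (fun l : 'I_(size t) => t`_l *~ c`_l)); last first.
    by move=> l _; rewrite nth_rcons /= ltn_ord.
  move=> hs.
  have [d0|dn0] := eqVneq c`_(size t) 0.
    exfalso; apply: hi.
    move: hs; rewrite d0 mulr0z addr0 => hs.
    have := ht (take (size t) c); rewrite size_takel ?hc // => /(_ erefl).
    have -> : \sum_(l < size t) t`_l *~ (take (size t) c)`_l = 0.
      by rewrite -[RHS]hs; apply: eq_bigr => l _; rewrite nth_take.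
    move=> /(_ erefl) hz.
    case: (ltngtP i (size t)) => hit.
    - by have := hz i; rewrite nth_take.
    - by rewrite nth_default // hc.
    - by rewrite hit.
  exists (c`_(size t), fun l => - c`_l); split => //=.
  apply/eqP; rewrite -subr_eq0 (eq_bigr (fun l : 'I_(size t) => - (t`_l *~ c`_l))).
    by rewrite sumrN opprK addrC hs.
  by move=> l _; rewrite mulrNz.
pose g a := proj1_sig (constructive_indefinite_description _ (hdep a)).
have hg a : (g a).1 != 0 /\ a *~ (g a).1 = \sum_(i < size t) t`_i *~ (g a).2 i :=
  proj2_sig (constructive_indefinite_description _ (hdep a)).
have [u [hIu hL]] := hu (size t).
pose M : 'M[rat]_(size u, size t) := \matrix_(j, i) ((g u`_j).2 i)%:~R.
have : kermx M != 0.
  rewrite kermx_eq0 -row_leq_rank -ltnNge; exact: leq_ltn_trans (rank_leq_col M) hL.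
case/rowV0Pn => v /sub_kermxP hvM vn0.
pose P : int := \prod_(j < size u) denq (v 0 j).
pose w (j : 'I_(size u)) : int := numq (v 0 j) * \prod_(l < size u | l != j) denq (v 0 l).
have W j : (w j)%:~R = v 0 j * P%:~R :> rat.
  by rewrite /w /P [X in _ = _ * X%:~R](bigD1 j) //= !intrM mulrA numqE.
have hrel : forall i : 'I_(size t), \sum_(j < size u) w j * (g u`_j).2 i = 0.
  move=> i; apply/eqP; rewrite -(intr_eq0 rat) rmorph_sum /=.
  have := congr1 (fun r : 'rV[rat]_(size t) => r 0 i) hvM; rewrite !mxE => /(congr1 (fun r : rat => P%:~R * r)).
  rewrite mulr0 mulr_sumr => h0; apply/eqP; rewrite -[RHS]h0; apply: eq_bigr => j _.
  by rewrite intrM W mxE; ring.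
have [j0 hj0] : exists j0, v 0 j0 != 0.
  apply: NNPP => h; move/eqP: vn0; apply; apply/rowP => j; rewrite !mxE.
  by apply/eqP/negPn/negP => hj; apply: h; exists j.
have Pn0 : P != 0 by apply/prodf_neq0 => j _; exact: denq_neq0.
have wn0 : w j0 != 0.
  by rewrite -(intr_eq0 rat) W mulf_eq0 negb_or hj0 intr_eq0.
pose F (j : 'I_(size u)) := (g u`_j).1 * w j.
have := hIu [seq F j | j <- enum 'I_(size u)].
rewrite size_map size_enum_ord => /(_ erefl).
have -> : \sum_(j < size u) u`_j *~ [seq F j | j <- enum 'I_(size u)]`_j = 0.
  rewrite (eq_bigr (fun j : 'I_(size u) => \sum_(i < size t) t`_i *~ ((g u`_j).2 i * w j))); last first.
    move=> j _; rewrite (nth_map j) ?size_enum_ord // nth_ord_enum /F mulrzA (proj2 (hg _)).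
    by rewrite mulrz_suml; apply: eq_bigr => i _; rewrite mulrzA.
  rewrite exchange_big /= big1 // => i _.
  rewrite -mulrz_sumr (eq_bigr (fun j : 'I_(size u) => w j * (g u`_j).2 i)) ?hrel ?mulr0z //.
  by move=> j _; rewrite mulrC.
move=> /(_ erefl j0); rewrite (nth_map j0) ?size_enum_ord // nth_ord_enum /F.
by move/eqP; rewrite mulf_eq0 (negbTE (proj1 (hg _))) (negbTE wn0).
Qed.

Lemma inf_seq (A : zmodType) (htf : torsion_free A) :
  ~ finite_rank A -> exists f : nat -> A, forall K, Zindep (mkseq f K).
Proof.
move=> hnr.
have hu : forall N, exists s : seq A, Zindep s /\ (N < size s)%N.
  move=> N; apply: NNPP => h; apply: hnr; exists N => s hs; rewrite leqNgt; apply/negP => hlt.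
  by apply: h; exists s; split.
pose ext (t : seq A) := epsilon (inhabits (0 : A)) (fun a => Zindep (rcons t a)).
have hext t : Zindep t -> Zindep (rcons t (ext t)).
  move=> ht; apply: (epsilon_spec (inhabits (0:A)) (fun a => Zindep (rcons t a))).
  exact: (@exchange A htf t ht hu).
pose g := fix g K := if K is K'.+1 then rcons (g K') (ext (g K')) else [::].
have gI K : Zindep (g K).
  elim: K => [|K ih] /=; last exact: hext.
  by move=> c /size0nil -> _ i; rewrite nth_nil.
have gs K : size (g K) = K by elim: K => //= K ih; rewrite size_rcons ih.
exists (fun i => nth 0 (g i.+1) i).
suff H : forall K, mkseq (fun i => nth 0 (g i.+1) i) K = g K by move=> K; rewrite H.
by elim => [|K ih] //; rewrite mkseqS ih /= nth_rcons gs ltnn eqxx.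
Qed.

Lemma inert_rank (A : zmodType) (htf : torsion_free A) (phi : {additive A -> A}) (m n : int) :
  mult_by phi m n -> coprimez m n -> inertial phi -> `|n| != 1 -> finite_rank A.
Proof.
move=> [hn hm] hc hI hn1; apply: NNPP => hnr.
have [f hf] := inf_seq htf hnr.
have [s hs] := hI (spanf f) (spanf_sg f).
have [i [j [y [hij hj hi' hj']]]] := @pigeon _ s (fun i y => spanf f (phi (f i) - y))
  (fun i _ => let: ex_intro2 y hy hz := hs (phi (f i)) (ex_intro _ (f i) (ex_intro _ 0
     (And3 (spanf_f f i) (spanf_sg f).1 (esym (addr0 _))))) in ex_intro _ y (conj hy hz)).
have [K [c e]] := (spanf_sg f).2 _ _ hj' hi'.
move: e; rewrite opprB addrA subrK => e.
have hjK : (j < maxn K j.+1)%N by rewrite (leq_trans _ (leq_maxr K j.+1)).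
have e2 : \sum_(l < maxn K j.+1) f l *~ ((if (l < K)%N then c l else 0) * n) =
   \sum_(l < maxn K j.+1) f l *~ ((if l == j :> nat then m else 0) - (if l == i :> nat then m else 0)).
  rewrite (eq_bigr (fun l : 'I_(maxn K j.+1) => f l *~ (if (l < K)%N then c l else 0) *~ n)); last first.
    by move=> l _; rewrite mulrzA.
  rewrite -mulrz_suml -(@spanf_ext _ f K (maxn K j.+1) c (leq_maxl _ _)) -e mulrzBl !hm.
  rewrite (eq_bigr (fun l : 'I_(maxn K j.+1) => f l *~ (if l == j :> nat then m else 0) -
     f l *~ (if l == i :> nat then m else 0))); last by move=> l _; rewrite mulrzBr.
  by rewrite sumrB !delta_sum // (ltn_trans hij hjK).
have := @uniq_rep _ f _ (hf (maxn K j.+1)) (fun l => (if (l < K)%N then c l else 0) * n) (fun l => (if l == j :> nat then m else 0) - (if l == i :> nat then m else 0)) e2 _ hjK.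
rewrite eqxx (gtn_eqF hij) subr0 => hcj.
have : (n %| m)%Z by rewrite -hcj dvdz_mull.
move/gcdz_idPr; move: hc; rewrite /coprimez => /eqP -> hn1'.
by move/negP: hn1; apply; rewrite -abszE -hn1'.
Qed.

Lemma left_rank (A : zmodType) (htf : torsion_free A) (phi : {additive A -> A}) (m n : int) :
  mult_by phi m n -> coprimez m n -> left_inertial phi -> `|m| != 1 -> finite_rank A.
Proof.
move=> [hn hm] hc hL hm1; apply: NNPP => hnr.
have [f hf] := inf_seq htf hnr.
have [s hs] := hL (spanf f) (spanf_sg f).
have [i [j [y [hij hj hi' hj']]]] := @pigeon _ s (fun i y => cap_img phi (spanf f) (f i - y))
  (fun i _ => let: ex_intro2 y hy hz := hs (f i) (spanf_f f i) in ex_intro _ y (conj hy hz)).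
have := (cap_sg phi (spanf_sg f)).2 _ _ hj' hi'.
rewrite opprB addrA subrK => -[_ [w [[K [c ->]] e]]].
have hjK : (j < maxn K j.+1)%N by rewrite (leq_trans _ (leq_maxr K j.+1)).
have e2 : \sum_(l < maxn K j.+1) f l *~ ((if (l < K)%N then c l else 0) * m) =
   \sum_(l < maxn K j.+1) f l *~ ((if l == j :> nat then n else 0) - (if l == i :> nat then n else 0)).
  rewrite (eq_bigr (fun l : 'I_(maxn K j.+1) => f l *~ (if (l < K)%N then c l else 0) *~ m)); last first.
    by move=> l _; rewrite mulrzA.
  rewrite -mulrz_suml -(@spanf_ext _ f K (maxn K j.+1) c (leq_maxl _ _)) -hm -e mulrzBl.
  rewrite (eq_bigr (fun l : 'I_(maxn K j.+1) => f l *~ (if l == j :> nat then n else 0) -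
     f l *~ (if l == i :> nat then n else 0))); last by move=> l _; rewrite mulrzBr.
  by rewrite sumrB !delta_sum // (ltn_trans hij hjK).
have := @uniq_rep _ f _ (hf (maxn K j.+1)) (fun l => (if (l < K)%N then c l else 0) * m) (fun l => (if l == j :> nat then n else 0) - (if l == i :> nat then n else 0)) e2 _ hjK.
rewrite eqxx (gtn_eqF hij) subr0 => hcj.
have : (m %| n)%Z by rewrite -hcj dvdz_mull.
move/gcdz_idPl; move: hc; rewrite /coprimez => /eqP -> hm1'.
by move/negP: hm1; apply; rewrite -abszE -hm1'.
Qed.

Definition inM (A : zmodType) (X : A -> Prop) (n : nat) : A -> Prop :=
  fun u => exists w, X w /\ u = w *+ n.

Lemma inM_sg (A : zmodType) (X : A -> Prop) n : is_subgroup X -> is_subgroup (inM X n).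
Proof.
move=> hX; split; first by exists 0; split; [exact: hX.1 | rewrite mul0rn].
move=> _ _ [w [hw ->]] [w' [hw' ->]]; exists (w - w'); split; first exact: hX.2.
by rewrite mulrnBl.
Qed.

Definition pindep (A : zmodType) (X : A -> Prop) (p : nat) (z : seq A) :=
  forall c : seq int, size c = size z ->
  inM X p (\sum_(i < size z) z`_i *~ c`_i) -> forall i, (p%:Z %| c`_i)%Z.

Lemma pindep_Zindep (A : zmodType) (htf : torsion_free A) (X : A -> Prop) p (z : seq A) :
  is_subgroup X -> prime p -> pindep X p z -> Zindep z.
Proof.
move=> hX hp hz c hc hs.
have H : forall k i, ((p ^ k)%N%:Z %| c`_i)%Z.
  elim=> [|k ih] i; first by rewrite expn0 dvd1z.
  pose d := mkseq (fun l => (c`_l %/ (p ^ k)%N%:Z)%Z) (size z).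
  have hd l : c`_l = d`_l * (p ^ k)%N%:Z.
    case: (ltnP l (size z)) => hl; first by rewrite nth_mkseq // divzK.
    by rewrite !nth_default ?size_mkseq ?hc // mul0r.
  have pk0 : (p ^ k)%N%:Z != 0.
    have : (0 < p ^ k)%N by rewrite expn_gt0 prime_gt0.
    by case: (p ^ k)%N.
  have hd0 : \sum_(l < size z) z`_l *~ d`_l = 0.
    apply: (tfz htf pk0).
    rewrite mulrz_suml -[RHS]hs; apply: eq_bigr => l _; rewrite -mulrzA -hd //.
  have := hz d; rewrite size_mkseq => /(_ erefl); rewrite hd0.
  move=> /(_ (ex_intro _ 0 (conj hX.1 (esym (mul0rn _ _))))) hpd.
  rewrite hd expnSr PoszM [X in (_ %| X)%Z]mulrC; exact: dvdz_mul (dvdzz _) (hpd i).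
move=> i; have := H (absz c`_i) i; rewrite dvdzE absz_nat.
have [->//|ci] := eqVneq c`_i 0.
move=> /dvdn_leq; rewrite absz_gt0 ci => /(_ isT).
by rewrite leqNgt ltn_expl ?prime_gt1.
Qed.

Fixpoint combos (A : zmodType) (p : nat) (z : seq A) : seq A :=
  if z is a :: z' then [seq a *+ r + w | r <- iota 0 p, w <- combos p z'] else [:: 0].

Lemma combos_cover (A : zmodType) (X : A -> Prop) (p : nat) (z : seq A) :
  is_subgroup X -> (0 < p)%N -> (forall a, a \in z -> X a) ->
  forall c : seq int, exists2 w, w \in combos p z & inM X p (\sum_(i < size z) z`_i *~ c`_i - w).
Proof.
move=> hX hp; elim: z => [|a z ih] hz c /=.
  exists 0; first by rewrite inE.
  by rewrite big_ord0 subr0; exists 0; split; [exact: hX.1 | rewrite mul0rn].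
have hz' : forall b, b \in z -> X b by move=> b hb; apply: hz; rewrite inE hb orbT.
have [w hw [v [hv ev]]] := ih hz' (behead c).
rewrite big_ord_recl /=.
rewrite (eq_bigr (fun i : 'I_(size z) => z`_i *~ (behead c)`_i)); last first.
  by move=> i _ /=; rewrite add0n nth_behead /bump leq0n add1n.
pose r := (c`_0 %% p%:Z)%Z.
have pz : p%:Z != 0 by move: hp; case: (p).
have hr : ((absz r))%:Z = r by rewrite gez0_abs // modz_ge0.
have rp : ((absz r) < p)%N.
  by rewrite -ltz_nat hr ltz_pmod.
exists (a *+ (absz r) + w).
  by apply: allpairs_f => //; rewrite mem_iota add0n.
exists (a *~ (c`_0 %/ p%:Z)%Z + v); split.
  apply: sg_add => //; apply: sg_mulz => //; apply: hz; exact: mem_head.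
rewrite {1}(divz_eq c`_0 p%:Z) mulrzDr mulrzA -pmulrn -/r -hr -pmulrn mulrnDl -ev.
by rewrite opprD addrACA addrK.
Qed.

Lemma seq_choice (A : eqType) (s0 : seq A) (R : A -> A -> Prop) :
  exists s : seq A, forall t, t \in s0 -> (exists y, R t y) -> exists2 y, y \in s & R t y.
Proof.
elim: s0 => [|t s0 [s hs]]; first by exists [::].
case: (classic (exists y, R t y)) => [[y hy]|hn].
  exists (y :: s) => t'; rewrite inE => /orP [/eqP -> _ | ht']; first by exists y; rewrite ?mem_head.
  by move=> /(hs t' ht') [y' hy' hr]; exists y' => //; rewrite inE hy' orbT.
exists s => t'; rewrite inE => /orP [/eqP -> hy|ht']; last exact: hs.
by exfalso; apply: hn.
Qed.

Lemma pindep_cons (A : zmodType) (X : A -> Prop) (p : nat) (y : A) (z : seq A) :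
  is_subgroup X -> prime p -> X y -> (forall a, a \in z -> X a) -> pindep X p z ->
  ~ (exists2 w, w \in combos p z & inM X p (y - w)) -> pindep X p (y :: z).
Proof.
move=> hX hp hy hzX hz hny c hc hs.
have hM := inM_sg p hX.
move: hs; rewrite big_ord_recl /=.
rewrite (eq_bigr (fun i : 'I_(size z) => z`_i *~ (behead c)`_i)); last first.
  by move=> i _ /=; rewrite add0n nth_behead /bump leq0n add1n.
set S := \sum_(i < size z) z`_i *~ (behead c)`_i => hs.
have p0 : (p%:Z %| c`_0)%Z.
  apply: NNPP => hnd.
  have cop : coprimez c`_0 p%:Z.
    have : coprime p (absz c`_0) by rewrite prime_coprime // -[X in (X %| _)%N](absz_nat p) -dvdzE; apply/negP.
    by rewrite /coprimez /gcdz coprime_sym absz_nat.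
  have [[u v] /= huv] := coprimezP _ _ cop.
  pose c' := mkseq (fun i => - u * (behead c)`_i) (size z).
  have [w hw hw'] := combos_cover hX (prime_gt0 hp) hzX c'.
  apply: hny; exists w => //.
  have eS : \sum_(i < size z) z`_i *~ c'`_i = - (S *~ u).
    rewrite /S mulrz_suml -sumrN; apply: eq_bigr => i _.
    by rewrite nth_mkseq // mulNr mulrNz mulrC mulrzA.
  have ey : y = (y *~ c`_0) *~ u + (y *~ v) *+ p.
    by rewrite -!mulrzA pmulrn -mulrzA -mulrzDr (mulrC c`_0) huv mulr1z.
  have -> : y - w = (y *~ c`_0 + S) *~ u + ((y *~ v) *+ p + (- (S *~ u) - w)).
    by rewrite {1}ey mulrzDl -!addrA; congr (_ + _); rewrite addrCA addNKr.
  apply: sg_add => //; first exact: sg_mulz.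
  apply: sg_add => //; last by rewrite -eS.
  by exists (y *~ v); split => //; exact: sg_mulz.
have hS : inM X p S.
  have -> : S = (y *~ c`_0 + S) - y *~ c`_0 by rewrite addrC addKr.
  apply: hM.2 => //; exists (y *~ (c`_0 %/ p%:Z)%Z); split; first exact: sg_mulz.
  by rewrite pmulrn -mulrzA divzK.
have := hz (behead c); rewrite size_behead hc /= => /(_ erefl hS) hb.
by case=> [|i]; [exact: p0 | rewrite -nth_behead].
Qed.

Lemma pfinite (A : zmodType) (htf : torsion_free A) (X : A -> Prop) (N : nat) (p : nat) :
  is_subgroup X -> (forall s : seq A, Zindep s -> (size s <= N)%N) -> prime p ->
  finite_quotient X (inM X p).
Proof.
move=> hX hN hp.
suff H : forall k (z : seq A), (N - size z <= k)%N -> (forall a, a \in z -> X a) ->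
    pindep X p z -> finite_quotient X (inM X p).
  apply: (H N [::]) => //; first by rewrite subn0.
  by move=> c /size0nil -> _ i; rewrite nth_nil dvdz0.
have step : forall z, (forall a, a \in z -> X a) -> pindep X p z ->
    finite_quotient X (inM X p) \/
    exists y, pindep X p (y :: z) /\ (forall a, a \in y :: z -> X a).
  move=> z hzX hz.
  case: (classic (forall y, X y -> exists2 w, w \in combos p z & inM X p (y - w))) => [hall|hn].
    by left; exists (combos p z).
  right; have [y hy0] := not_all_ex_not _ _ hn; have [hy hny] := imply_to_and _ _ hy0.
  exists y; split; first exact: pindep_cons hX hp hy hzX hz hny.
  by move=> a; rewrite inE => /orP [/eqP -> //|]; exact: hzX.
elim=> [|k ih] z hk hzX hz; case: (step z hzX hz) => [//|[y [hz' hzX']]].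
  have := hN _ (pindep_Zindep htf hX hp hz') => /= hs.
  by exfalso; move: hk; rewrite leqn0 subn_eq0 leqNgt hs.
apply: (ih (y :: z)) => //=.
by rewrite subnS; move: hk; case: (N - size z)%N.
Qed.

Lemma comp_finite (A : zmodType) (X : A -> Prop) (a b : nat) :
  finite_quotient X (inM X a) -> finite_quotient X (inM X b) -> finite_quotient X (inM X (a * b)).
Proof.
move=> [s1 hs1] [s2 hs2]; exists [seq x + y *+ a | x <- s1, y <- s2] => z hz.
have [x hx [w [hw e1]]] := hs1 z hz.
have [y hy [v [hv e2]]] := hs2 w hw.
exists (x + y *+ a); first exact: allpairs_f.
exists v; split => //.
by rewrite mulnC mulrnA -e2 mulrnBl -e1 opprD addrA.
Qed.

Lemma nfinite (A : zmodType) (htf : torsion_free A) (X : A -> Prop) (N : nat) :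
  is_subgroup X -> (forall s : seq A, Zindep s -> (size s <= N)%N) ->
  forall n, (0 < n)%N -> finite_quotient X (inM X n).
Proof.
move=> hX hN n; elim: n {-2}n (leqnn n) => [|M ih] n hn hn0; first by case: n hn hn0.
case: (ltngtP n 1) => h.
- by case: n h hn hn0.
- have hp := pdiv_prime h.
  have e := divnK (pdiv_dvd n).
  rewrite -e; apply: comp_finite; last exact: (@pfinite A htf X N _ hX hN hp).
  apply: ih; last by rewrite divn_gt0 ?prime_gt0 // dvdn_leq // pdiv_dvd.
  by rewrite -ltnS (leq_trans _ hn) // ltn_Pdiv // prime_gt1.
- rewrite h; exists [:: 0] => z hz; exists 0; first by rewrite inE.
  by exists z; split => //; rewrite subr0.
Qed.

Lemma abs_mul (A : zmodType) (w : A) (m : int) : exists e : int, w *+ absz m = w *~ (m * e).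
Proof.
case: m => k; first by exists 1; rewrite mulr1 pmulrn.
by exists (-1); rewrite NegzE mulrN1 opprK pmulrn.
Qed.

Lemma tfn_inj (A : zmodType) (htf : torsion_free A) (x y : A) (k : nat) :
  (0 < k)%N -> x *+ k = y *+ k -> x = y.
Proof.
move=> hk; rewrite !pmulrn; apply: (tfz_inj htf); by case: k hk.
Qed.

Lemma sq1 (n : int) : `|n| = 1 -> n * n = 1.
Proof. by move=> h; rewrite -expr2 -real_normK ?num_real // h expr1n. Qed.

Lemma R_inv (A : zmodType) (htf : torsion_free A) (phi : {additive A -> A}) (m n : int) :
  mult_by phi m n -> coprimez m n -> (`|n| != 1 -> finite_rank A) -> inertial phi.
Proof.
move=> [hn hm] hc hfr X hX.
have [h1|h1] := eqVneq `|n| 1.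
  have nn := sq1 h1.
  exists [:: 0] => _ [x [x' [hx hx' ->]]]; exists 0; first by rewrite inE.
  have -> : phi x = x *~ (m * n) by rewrite -[LHS]mulr1z -nn mulrzA hm -mulrzA.
  by rewrite subr0; apply: sg_add => //; exact: sg_mulz.
have [N hN] := hfr h1.
pose K := absz n.
have K0 : (0 < K)%N by rewrite absz_gt0.
have [s0 hs0] := nfinite htf hX hN K0.
have [s hs] := seq_choice s0 (fun t y => img_plus phi X y /\ inM X K (y *+ K - t)).
exists s => z hz.
have hzK : X (z *+ K).
  case: hz => [x [x' [hx hx' ->]]]; have [e ->] := abs_mul (phi x + x') n.
  rewrite mulrzA mulrzDl hm; apply: sg_mulz => //; apply: sg_add => //; exact: sg_mulz.
have [t ht hzt] := hs0 _ hzK.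
have [y hy [hyY [w' [hw' ew']]]] := hs t ht (ex_intro _ z (conj hz hzt)).
case: hzt => [w [hw ew]].
have hzy : (z - y) *+ K = (w - w') *+ K by rewrite !mulrnBl -ew -ew' opprB addrA subrK.
exists y => //; rewrite (tfn_inj htf K0 hzy); exact: hX.2.
Qed.

Lemma L_inv (A : zmodType) (htf : torsion_free A) (phi : {additive A -> A}) (m n : int) :
  mult_by phi m n -> coprimez m n -> m != 0 -> (`|m| != 1 -> finite_rank A) -> left_inertial phi.
Proof.
move=> [hn hm] hc hm0 hfr X hX.
have [h1|h1] := eqVneq `|m| 1.
  have mm := sq1 h1.
  exists [:: 0] => z hz; exists 0; first by rewrite inE.
  rewrite subr0; split => //; exists (z *~ n *~ m); split; first by apply: (sg_mulz hX); apply: (sg_mulz hX).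
  by rewrite !raddfMz hm -mulrzA mm mulr1z.
have [N hN] := hfr h1.
pose K := absz m.
have K0 : (0 < K)%N by rewrite absz_gt0.
have [s0 hs0] := nfinite htf hX hN K0.
exists s0 => z hz.
have [y hy [w [hw ew]]] := hs0 z hz.
exists y => //; split; first by rewrite ew pmulrn; exact: sg_mulz.
have [e ee] := abs_mul w m; rewrite /K ee in ew.
exists (w *~ e *~ n); split; first by apply: (sg_mulz hX); apply: (sg_mulz hX).
by rewrite ew raddfMz hm -mulrzA mulrC.
Qed.

Theorem proposition2p2 (A : zmodType) (phi : {additive A -> A})
  (htf : torsion_free A) :
  (inertial phi <->
     exists m n : int, [/\ mult_by phi m n, coprimez m n &
                           (`|n| != 1 -> finite_rank A)])
  /\
  (left_inertial phi <->
     exists m n : int, [/\ mult_by phi m n, coprimez m n, m != 0 &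
                           (`|m| != 1 -> finite_rank A)]).
Proof.
split; split.
- move=> hI; have Hrat := rat_inertial hI.
  case: (classic (exists x0 : A, x0 != 0)) => [[x0 hx0]|hall].
    have [j [k [hk h]]] := Hrat x0.
    have [m [n [hn hc h0 _]]] := normalize htf hk h.
    have hmb : mult_by phi m n := conj hn (globalize htf Hrat hx0 h0).
    exists m, n; split => // hn1; exact: (@inert_rank A htf phi m n hmb hc hI hn1).
  have z0 (x : A) : x = 0 by apply: NNPP => hx; apply: hall; exists x; apply/eqP.
  exists 0, 1; split; [by split => // x; rewrite (z0 x) raddf0 !mul0rz | by [] | by rewrite normr1 eqxx].
- by move=> [m [n [hmb hc hfr]]]; exact: (@R_inv A htf phi m n hmb hc hfr).
- move=> hL; have Hl := rat_left htf hL.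
  have Hrat : forall y, exists j k : int, k != 0 /\ phi y *~ k = y *~ j.
    by move=> y; have [j [k [_ hk h]]] := Hl y; exists j, k.
  case: (classic (exists x0 : A, x0 != 0)) => [[x0 hx0]|hall].
    have [j [k [hj hk h]]] := Hl x0.
    have [m [n [hn hc h0 hmj]]] := normalize htf hk h.
    have hmb : mult_by phi m n := conj hn (globalize htf Hrat hx0 h0).
    exists m, n; split => //; first exact: hmj.
    move=> hm1; exact: (@left_rank A htf phi m n hmb hc hL hm1).
  have z0 (x : A) : x = 0 by apply: NNPP => hx; apply: hall; exists x; apply/eqP.
  exists 1, 1; split; [by split => // x; rewrite (z0 x) raddf0 !mul0rz | by [] | by [] | by rewrite normr1 eqxx].
- by move=> [m [n [hmb hc hm0 hfr]]]; exact: (@L_inv A htf phi m n hmb hc hm0 hfr).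
Qed.
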